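(* Let $\mathcal{M}=\langle S,\to,L\rangle$ be a labeled transition system, let $B\subseteq S\times S$ be a skipping simulation on $\mathcal{M}$, and let $\kappa$ be a cardinal with $\omega\preceq\kappa$ and $|S|\preceq\kappa$. Then for all $s,w\in S$, $\mathit{size}(\mathit{ranktCt}(\mathcal{M},s,w))$ is an ordinal of cardinality at most $\kappa$.
   Context: A labeled transition system is $\mathcal{M}=\langle S,\to,L\rangle$ where $S$ is a non-empty set of states, $\to\subseteq S\times S$ is left-total, and $L$ is a function with domain $S$. A fullpath is an infinite sequence $\sigma$ with $\sigma(i)\to\sigma(i+1)$ for all $i$; it starts at $\sigma(0)$. $w\to^{+}v$ means there is a finite path $w=v_0\to\cdots\to v_k=v$ with $k\ge1$. Let $\mathit{INC}$ be the set of strictly increasing infinite sequences of naturals starting at $0$. For a fullpath $\sigma$ and $\pi\in\mathit{INC}$ the $i$-th segment of $\sigma$ is $\sigma(\pi(i)),\dots,\sigma(\pi(i+1)-1)$. $\mathit{match}(B,\sigma,\delta)$ holds iff there exist $\pi,\xi\in\mathit{INC}$ such that for every $i$ and every state $x$ in the $i$-th segment of $\sigma$ w.r.t. $\pi$, $xB\delta(\xi(i))$. $B$ is a skipping simulation (SKS) iff for all $s,w$ with $sBw$: $L(s)=L(w)$, and for every fullpath $\sigma$ starting at $s$ there is a fullpath $\delta$ starting at $w$ with $\mathit{match}(B,\sigma,\delta)$. The computation tree $\mathit{ctree}(\mathcal{M},s)$ has as nodes finite sequences over $S$; it is the smallest tree such that $\langle s\rangle$ is the root, and if $\langle s,\dots,x\rangle$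 is a node and $x\to y$ then $\langle s,\dots,x,y\rangle$ is a node whose parent is $\langle s,\dots,x\rangle$. For the SKS $B$: if not $sBw$, $\mathit{ranktCt}(\mathcal{M},s,w)$ is the empty tree; otherwise it is the largest subtree of $\mathit{ctree}(\mathcal{M},s)$ (containing the root) such that every non-root node $\langle s,\dots,x\rangle$ satisfies $xBw$ and, for all $v$ with $w\to^{+}v$, not $xBv$. (Every branch of this tree is finite.) For a tree $t$ all of whose branches are finite, ordinals are assigned to its nodes by $\mathit{size}(t,x)=\bigcup_{c\text{ a child of }x}\mathit{size}(t,c)+1$ (von Neumann ordinals; the union of the successors, so a leaf gets $0$... i.e. the supremum of $\mathit{size}(t,c)+1$ over children $c$), and $\mathit{size}(\mathit{ranktCt}(\mathcal{M},s,w))=\mathit{size}(\mathit{ranktCt}(\mathcal{M},s,w),\langle s\rangle)$. $\preceq$ compares ordinals and cardinals. *)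

(* Defs.v *)
From Stdlib Require Import List.
Import ListNotations.
Set Implicit Arguments.

(** * Ordinals (Aczel/Brouwer style)
    [osup I f] denotes the ordinal  sup_{i : I} (f i + 1)
    (= union of the successors), exactly as in the paper's definition of size. *)
Inductive Ord : Type := osup : forall (I : Type), (I -> Ord) -> Ord.

Fixpoint ole (a b : Ord) : Prop :=
  match a with
  | osup f => forall i, match b with osup g => exists j, ole (f i) (g j) end
  end.

Definition olt (a b : Ord) : Prop :=
  match b with osup g => exists j, ole a (g j) end.

(** The cardinality of the ordinal [a] (the set of ordinals below [a], taken up
    to order-equivalence) is at most the cardinality of the type [K]. *)
Definition ocard_le (a : Ord) (K : Type) : Prop :=
  exists h : Ord -> K, forall b c, olt b a -> olt c a -> h b = h c ->
    ole b c /\ ole c b.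

Definition card_le (A K : Type) : Prop :=
  exists h : A -> K, forall x y, h x = h y -> x = y.

Section LTS.
Variables (St Lab : Type) (R : St -> St -> Prop) (L : St -> Lab).

Definition is_lts : Prop := inhabited St /\ (forall x, exists y, R x y).

Definition fullpath (sigma : nat -> St) : Prop := forall i, R (sigma i) (sigma (Datatypes.S i)).

Definition INC (pi : nat -> nat) : Prop := pi 0 = 0 /\ forall i, pi i < pi (Datatypes.S i).

Definition matchB (B : St -> St -> Prop) (sigma delta : nat -> St) : Prop :=
  exists pi xi, INC pi /\ INC xi /\
    forall i k, pi i <= k < pi (Datatypes.S i) -> B (sigma k) (delta (xi i)).

Definition SKS (B : St -> St -> Prop) : Prop :=
  forall s w, B s w ->
    L s = L w /\
    forall sigma, fullpath sigma -> sigma 0 = s ->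
      exists delta, fullpath delta /\ delta 0 = w /\ matchB B sigma delta.

Inductive tplus : St -> St -> Prop :=
  | tplus1 x y : R x y -> tplus x y
  | tplusS x y z : R x y -> tplus y z -> tplus x z.

Inductive ctree_node (s : St) : list St -> Prop :=
  | ct_root : ctree_node s [s]
  | ct_step l x y : ctree_node s (l ++ [x]) -> R x y -> ctree_node s (l ++ [x; y]).

(** Condition on the last state x of a non-root node of ranktCt(M,s,w). *)
Definition rank_cond (B : St -> St -> Prop) (w x : St) : Prop :=
  B x w /\ forall v, tplus w v -> ~ B x v.

Definition rank_subtree (B : St -> St -> Prop) (s w : St) (T : list St -> Prop) : Prop :=
  (forall n, T n -> ctree_node s n) /\
  T [s] /\
  (forall l x y, T (l ++ [x; y]) -> T (l ++ [x])) /\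
  (forall l x, T (l ++ [x]) -> l <> [] -> rank_cond B w x).

(** ranktCt(M,s,w): empty if not sBw, otherwise the largest such subtree
    (the union of all of them). *)
Definition ranktCt (B : St -> St -> Prop) (s w : St) : list St -> Prop :=
  fun n => B s w /\ exists T, rank_subtree B s w T /\ T n.

(** [is_size t n a]: size(t, n) = a, where the children of node n in t are the
    nodes n ++ [y] belonging to t.  size(t,n) = sup over children c of (size(t,c)+1). *)
Inductive is_size (t : list St -> Prop) : list St -> Ord -> Prop :=
  | is_size_intro n (f : {y : St | t (n ++ [y])} -> Ord) :
      (forall c, is_size t (n ++ [proj1_sig c]) (f c)) ->
      is_size t n (@osup {y : St | t (n ++ [y])} f).

End LTS.

(* Main.v *)
Require Import Defs.
From Stdlib Require Import List.
Import ListNotations.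
From Stdlib Require Import Lia Arith Classical ClassicalEpsilon.

Lemma snoc2_inj {A} (l0 l : list A) x0 y0 x y :
  l0 ++ [x0; y0] = (l ++ [x]) ++ [y] -> l0 = l /\ x0 = x /\ y0 = y.
Proof.
  intro H. change (l0 ++ [x0;y0]) with (l0 ++ [x0] ++ [y0]) in H.
  rewrite app_assoc in H.
  apply app_inj_tail in H as [H1 H2]. apply app_inj_tail in H1 as [H3 H4]. auto.
Qed.

Lemma snoc2_ne_single {A} (l : list A) x y s : (l ++ [x]) ++ [y] <> [s].
Proof. intro H. apply (f_equal (@length A)) in H. rewrite !length_app in H. simpl in H. lia. Qed.

Lemma ole_refl : forall a, ole a a.
Proof. induction a as [I f IH]. simpl. intro i. exists i. apply IH. Qed.

Lemma ole_trans : forall a b c, ole a b -> ole b c -> ole a c.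
Proof.
  induction a as [I f IH]. intros [J g] [K h] H1 H2. simpl in *. intro i.
  destruct (H1 i) as [j Hj]. destruct (H2 j) as [k Hk]. exists k. eapply IH; eauto.
Qed.

Lemma ole_total : forall x y, ole x y \/ olt y x.
Proof.
  induction x as [I f IH]. intros [J g].
  destruct (classic (exists i, ole (osup g) (f i))) as [Hx|Hn].
  - right. exact Hx.
  - left. simpl. intro i.
    destruct (classic (exists k, ole (f i) (g k))) as [Hk|Hk]; [exact Hk|].
    exfalso. apply Hn. exists i.
    pose proof (IH i) as IHi. revert IHi Hk. destruct (f i) as [I' h]. intros IHi Hk.
    simpl. intro k.
    destruct (IHi (g k)) as [H|H].
    + exfalso; apply Hk; exists k; exact H.
    + exact H.
Qed.

Section Main.
Variables (S Lab : Type) (R : S -> S -> Prop) (L : S -> Lab) (B : S -> S -> Prop) (s w : S).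

Lemma child_props m x y : ranktCt R B s w ((m ++ [x]) ++ [y]) -> R x y /\ rank_cond R B w y.
Proof.
  intros [HBsw [T [[Hct [Hroot [Hpar Hcond]]] HT]]].
  split.
  - pose proof (Hct _ HT) as Hc. remember ((m ++ [x]) ++ [y]) as n eqn:En.
    destruct Hc as [|l0 x0 y0 Hc0 HR].
    + exfalso. symmetry in En. exact (snoc2_ne_single _ _ _ _ En).
    + apply snoc2_inj in En as [-> [-> ->]]. exact HR.
  - apply (Hcond (m ++ [x]) y HT). intro H. destruct m; discriminate H.
Qed.

Lemma child_transfer m m' x y :
  ranktCt R B s w (m' ++ [x]) -> ranktCt R B s w ((m ++ [x]) ++ [y]) ->
  ranktCt R B s w ((m' ++ [x]) ++ [y]).
Proof.
  intros Hm' Hc. destruct (child_props _ _ _ Hc) as [HR Hrc].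
  destruct Hm' as [HBsw [T [[Hct [Hroot [Hpar Hcond]]] HT]]].
  split; [exact HBsw|].
  exists (fun n => T n \/ n = (m' ++ [x]) ++ [y]). split; [|right; reflexivity].
  split; [|split; [|split]].
  - intros n [Hn| ->]; [now apply Hct|].
    rewrite <- app_assoc. simpl. apply ct_step; [now apply Hct | exact HR].
  - left; exact Hroot.
  - intros l x0 y0 [Hn|Hn]; [left; eapply Hpar; eauto|].
    apply snoc2_inj in Hn as [-> [-> ->]]. left. exact HT.
  - intros l x0 [Hn|Hn] Hl; [eapply Hcond; eauto|].
    apply app_inj_tail in Hn as [_ ->]. exact Hrc.
Qed.

Definition Cs (y x : S) := R x y /\ rank_cond R B w y.

Lemma size_exists : forall x, Acc Cs x -> forall l, exists a, is_size (ranktCt R B s w) (l ++ [x]) a.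
Proof.
  intros x Hacc. induction Hacc as [x _ IH]. intro l.
  assert (Hc : forall c : {y | ranktCt R B s w ((l ++ [x]) ++ [y])},
             exists a, is_size (ranktCt R B s w) ((l++[x]) ++ [proj1_sig c]) a).
  { intros [y Hy]. simpl. apply (IH y (child_props _ _ _ Hy) (l ++ [x])). }
  exists (osup (fun c => proj1_sig (constructive_indefinite_description _ (Hc c)))).
  constructor. intro c. exact (proj2_sig (constructive_indefinite_description _ (Hc c))).
Qed.

Lemma not_acc_step x : ~ Acc Cs x -> exists y, Cs y x /\ ~ Acc Cs y.
Proof.
  intro H. apply NNPP. intro H'. apply H. constructor. intros y Hy.
  apply NNPP. intro Hn. apply H'. exists y. auto.
Qed.

Lemma tplus_path (d : nat -> S) : fullpath R d -> forall m j, tplus R (d j) (d (Datatypes.S (j + m))).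
Proof.
  intros Hd m. induction m as [|m IH]; intro j.
  - rewrite Nat.add_0_r. apply tplus1. apply Hd.
  - apply tplusS with (d (Datatypes.S j)); [apply Hd|].
    replace (Datatypes.S (j + Datatypes.S m)) with (Datatypes.S (Datatypes.S j + m)) by lia. apply IH.
Qed.

Lemma acc_root : B s w -> SKS R L B -> Acc Cs s.
Proof.
  intros HBsw HB. apply NNPP. intro Hn.
  pose (X := {x | ~ Acc Cs x}).
  assert (step : forall p : X, {q : X | Cs (proj1_sig q) (proj1_sig p)}).
  { intros [x Hx]. destruct (constructive_indefinite_description _ (not_acc_step x Hx)) as [y [Hy1 Hy2]].
    exists (exist _ y Hy2). exact Hy1. }
  pose (nxt := fun p => proj1_sig (step p)).
  pose (sigma := fun k => proj1_sig (Nat.iter k nxt (exist _ s Hn : X))).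
  assert (Hstep : forall k, Cs (sigma (Datatypes.S k)) (sigma k)).
  { intro k. exact (proj2_sig (step (Nat.iter k nxt (exist _ s Hn : X)))). }
  assert (Hfp : fullpath R sigma) by (intro k; apply Hstep).
  destruct (proj2 (HB s w HBsw) sigma Hfp eq_refl)
    as [delta [Hd [Hd0 [pi [xi [[Hpi0 Hpi] [[Hxi0 Hxi] Hm]]]]]]].
  assert (Hk : B (sigma (pi 1)) (delta (xi 1))).
  { apply (Hm 1 (pi 1)). split; [lia | apply Hpi]. }
  pose proof (Hpi 0) as Hp1. pose proof (Hxi 0) as Hx1.
  assert (Ht : tplus R w (delta (xi 1))).
  { pose proof (tplus_path delta Hd (xi 1 - 1) 0) as Hq. rewrite Hd0 in Hq.
    replace (Datatypes.S (0 + (xi 1 - 1))) with (xi 1) in Hq by lia. exact Hq. }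
  pose proof (Hstep (pi 1 - 1)) as [_ Hrc].
  replace (Datatypes.S (pi 1 - 1)) with (pi 1) in Hrc by lia.
  exact (proj2 Hrc _ Ht Hk).
Qed.

Lemma size_le : forall n a, is_size (ranktCt R B s w) n a -> forall n' a', is_size (ranktCt R B s w) n' a' ->
  (forall y, ranktCt R B s w (n ++ [y]) -> ranktCt R B s w (n' ++ [y])) -> ole a a'.
Proof.
  intros n a H. induction H as [n f Hf IH]. intros n' a' H' Hch.
  destruct H' as [n' g Hg]. simpl. intros [y Hy].
  exists (exist _ y (Hch y Hy)).
  apply (IH (exist _ y Hy) (n' ++ [y]) (g (exist _ y (Hch y Hy)))).
  - exact (Hg (exist _ y (Hch y Hy))).
  - intros z Hz. simpl in Hz |- *. apply (child_transfer n n' y z (Hch y Hy) Hz).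
Qed.

Definition Prep (b : Ord) (x : S) := exists l a', ranktCt R B s w (l ++ [x]) /\
  is_size (ranktCt R B s w) (l ++ [x]) a' /\ ole b a' /\ ole a' b.

Lemma below_rep : forall n a, is_size (ranktCt R B s w) n a -> forall m x, n = m ++ [x] ->
  ranktCt R B s w n -> forall b, ole b a -> exists x, Prep b x.
Proof.
  intros n a H. induction H as [n f Hf IH]. intros m x En Hn b Hb.
  destruct (ole_total (osup f) b) as [H|H]; [|cbn in H; destruct H as [[y Hy] H]].
  - exists x. exists m, (osup f). subst n. split; [exact Hn|]. split; [constructor; exact Hf|]. split; assumption.
  - exact (IH (exist _ y Hy) n y eq_refl Hy b H).
Qed.

Lemma main_sw (K : Type) : SKS R L B -> card_le S K ->
    (exists a, is_size (ranktCt R B s w) [s] a) /\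
    (forall a, is_size (ranktCt R B s w) [s] a -> ocard_le a K).
Proof.
  intros HB HS. split.
  - destruct (classic (B s w)) as [HBsw|HnB].
    + exact (size_exists s (acc_root HBsw HB) []).
    + exists (osup (fun c : {y | ranktCt R B s w ([s] ++ [y])} => match HnB (proj1 (proj2_sig c)) with end)).
      constructor. intro c. exfalso. exact (HnB (proj1 (proj2_sig c))).
  - intros a Ha. destruct HS as [h0 Hh0].
    assert (Hrep : forall b, olt b a -> exists x, Prep b x).
    { intros b Hb. revert Hb. destruct Ha as [n f Hf]. intros [[y Hy] Hb].
      exact (below_rep _ _ (Hf (exist _ y Hy)) n y eq_refl Hy b Hb). }
    exists (fun b => match excluded_middle_informative (exists x, Prep b x) with
                     | left H => h0 (proj1_sig (constructive_indefinite_description _ H))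
                     | right _ => h0 s end).
    intros b c Hb Hc Heq. cbv beta in Heq. revert Heq.
    destruct (excluded_middle_informative (exists x, Prep b x)) as [Eb|Eb];
      [|exfalso; exact (Eb (Hrep b Hb))].
    destruct (excluded_middle_informative (exists x, Prep c x)) as [Ec|Ec];
      [|exfalso; exact (Ec (Hrep c Hc))].
    destruct (constructive_indefinite_description _ Eb) as [x1 P1].
    destruct (constructive_indefinite_description _ Ec) as [x2 P2].
    simpl. intro Heq. apply Hh0 in Heq. subst x2.
    destruct P1 as [l1 [a1 [T1 [S1 [B1 B1']]]]].
    destruct P2 as [l2 [a2 [T2 [S2 [B2 B2']]]]].
    assert (E12 : ole a1 a2).
    { apply (size_le _ _ S1 _ _ S2). intros y Hy. exact (child_transfer l1 l2 x1 y T2 Hy). }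
    assert (E21 : ole a2 a1).
    { apply (size_le _ _ S2 _ _ S1). intros y Hy. exact (child_transfer l2 l1 x1 y T1 Hy). }
    split.
    + apply ole_trans with a1; auto. apply ole_trans with a2; auto.
    + apply ole_trans with a2; auto. apply ole_trans with a1; auto.
Qed.

End Main.

Theorem lemma2 (S Lab K : Type) (R : S -> S -> Prop) (L : S -> Lab)
  (B : S -> S -> Prop)
  (HM : is_lts R) (HB : SKS R L B)
  (Homega : card_le nat K) (HS : card_le S K) :
  forall s w : S,
    (exists a, is_size (ranktCt R B s w) [s] a) /\
    (forall a, is_size (ranktCt R B s w) [s] a -> ocard_le a K).
Proof.
  intros s w. eapply main_sw; eassumption.
Qed.
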